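(* Let $Q$ be an infinite $\mathbb{N}^*\setminus Q$--free set. Then for every real $\nu>0$: $$\sum_{q\in Q}q^{-\nu}<\infty \iff \sum_{\pi\in\mathrm{Supp}(Q)}\pi^{-\nu}<\infty.$$ In particular, $\nu(Q)$ depends only on $\mathrm{Supp}(Q)$.
   Context: $\mathbb{N}^*$ denotes the set of positive integers. A set $Q\subseteq\mathbb{N}^*$ is called $\mathbb{N}^*\setminus Q$--free if for every $q\in\mathbb{N}^*$: $q\in Q$ if and only if no $v\in\mathbb{N}^*\setminus Q$ divides $q$. $\mathrm{Supp}(Q)$ denotes the set of all primes dividing at least one element of $Q$. For an infinite set $Q\subseteq\mathbb{N}^*$, its exponent of convergence is $\nu(Q)=\inf\{\nu>0:\sum_{q\in Q}q^{-\nu}<\infty\}$. *)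

(* Defs.v *)
From Stdlib Require Import Reals List Arith ZArith Znumtheory.
Open Scope R_scope.

Definition subset_Nstar (Q : nat -> Prop) : Prop := forall q, Q q -> (1 <= q)%nat.

Definition complement_free (Q : nat -> Prop) : Prop :=
  forall q : nat, (1 <= q)%nat ->
    (Q q <-> ~ (exists v : nat, (1 <= v)%nat /\ ~ Q v /\ Nat.divide v q)).

Definition infinite_set (Q : nat -> Prop) : Prop :=
  forall N : nat, exists q, (N < q)%nat /\ Q q.

Definition is_prime_nat (p : nat) : Prop := prime (Z.of_nat p).

Definition Supp (Q : nat -> Prop) (p : nat) : Prop :=
  is_prime_nat p /\ exists q, Q q /\ Nat.divide p q.

Definition sum_pow_list (nu : R) (l : list nat) : R :=
  fold_right (fun q acc => Rpower (INR q) (- nu) + acc) 0 l.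

(* sum_{q in S} q^(-nu) < infinity, for a set S of positive integers:
   the (nonnegative) unordered sum is finite iff the sums over all finite
   subsets are bounded. *)
Definition summable_pow (S : nat -> Prop) (nu : R) : Prop :=
  exists M : R, forall l : list nat,
    NoDup l -> Forall S l -> sum_pow_list nu l <= M.

(* Main.v *)
Require Import Defs.
From Stdlib Require Import Reals List Arith ZArith Znumtheory.
Open Scope R_scope.
From Stdlib Require Import Lia Lra Classical.
Lemma divide_nat_Z a b : Nat.divide a b <-> Z.divide (Z.of_nat a) (Z.of_nat b).
Proof.
  split.
  - intros [k Hk]. exists (Z.of_nat k). subst. now rewrite Nat2Z.inj_mul.
  - intros H. destruct (Nat.eq_dec a 0) as [->|Ha].
    + destruct H as [k Hk]. simpl in Hk. rewrite Z.mul_0_r in Hk.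
      assert (b = 0%nat) by lia. subst. apply Nat.divide_0_r.
    + apply Nat.Lcm0.mod_divide. apply Z.mod_divide in H; [|lia].
      rewrite <- Nat2Z.inj_mod in H. lia.
Qed.

Lemma prime_nat_ge2 p : is_prime_nat p -> (2 <= p)%nat.
Proof. intros H. apply prime_ge_2 in H. lia. Qed.

Lemma exists_prime_divisor n : (2 <= n)%nat -> exists r, is_prime_nat r /\ Nat.divide r n.
Proof.
  induction n as [n IH] using lt_wf_ind. intros Hn.
  destruct (prime_dec (Z.of_nat n)) as [Hp|Hp].
  - exists n. split; [exact Hp| apply Nat.divide_refl].
  - destruct (not_prime_divide (Z.of_nat n)) as [m [Hm Hd]]; [lia|exact Hp|].
    destruct (IH (Z.to_nat m)) as [r [Hr Hrd]]; [lia|lia|].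
    exists r. split; [exact Hr|]. eapply Nat.divide_trans; [exact Hrd|].
    apply divide_nat_Z. rewrite Z2Nat.id by lia. exact Hd.
Qed.
Definition smooth (S : list nat) (q : nat) : Prop :=
  forall r, is_prime_nat r -> Nat.divide r q -> In r S.

Lemma exp_mono a b : a <= b -> exp a <= exp b.
Proof. intros [H|H]; [left; now apply exp_increasing | subst; lra]. Qed.

Lemma Rpower_pos' a y : 0 < Rpower a y.
Proof. unfold Rpower. apply exp_pos. Qed.

Lemma sum_nonneg nu l : 0 <= sum_pow_list nu l.
Proof. induction l; simpl; [lra|]. pose proof (Rpower_pos' (INR a) (-nu)). lra. Qed.

Lemma sum_split nu (b : nat -> bool) l :
  sum_pow_list nu l = sum_pow_list nu (filter b l) + sum_pow_list nu (filter (fun q => negb (b q)) l).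
Proof. induction l; simpl; [lra|]. destruct (b a); simpl; lra. Qed.

Lemma sum_div nu p l : (1 <= p)%nat ->
  Forall (fun q => (1 <= q)%nat /\ Nat.divide p q) l ->
  sum_pow_list nu l = Rpower (INR p) (-nu) * sum_pow_list nu (map (fun q => q / p)%nat l).
Proof.
  intros Hp. induction l as [|a l IH]; intros HF; simpl; [lra|].
  inversion HF as [|? ? [Ha1 Ha2] HF']; subst.
  rewrite IH by exact HF'.
  destruct Ha2 as [k Hk].
  assert (E : (a / p = k)%nat) by (subst; apply Nat.div_mul; lia).
  rewrite E. subst a. rewrite mult_INR.
  rewrite <- Rpower_mult_distr.
  - ring.
  - apply lt_0_INR. lia.
  - apply lt_0_INR. destruct k; lia.
Qed.

Section Main.
Variable nu : R.
Hypothesis Hnu : 0 < nu.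
Let x0 := Rpower 2 (-nu).
Let c := / (1 - x0).

Lemma x0_lt1 : 0 < x0 < 1.
Proof.
  unfold x0. split; [apply Rpower_pos'|].
  rewrite <- (Rpower_O 2) by lra. apply Rpower_lt; lra.
Qed.

Lemma xp_le p : (2 <= p)%nat -> 0 < Rpower (INR p) (-nu) <= x0.
Proof.
  intros Hp. split; [apply Rpower_pos'|]. unfold x0.
  rewrite !Rpower_Ropp. apply Rinv_le_contravar.
  - apply Rpower_pos'.
  - apply Rle_Rpower_l; [lra|]. split; [lra|].
    replace 2 with (INR 2) by (simpl; lra). apply le_INR. exact Hp.
Qed.

Lemma smooth_bound : forall S, Forall (fun p => (2 <= p)%nat) S ->
  forall l, NoDup l -> Forall (fun q => (1 <= q)%nat /\ smooth S q) l ->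
  sum_pow_list nu l <= exp (c * sum_pow_list nu S).
Proof.
  pose proof x0_lt1 as Hx0.
  assert (Hc : 0 < c) by (unfold c; apply Rinv_0_lt_compat; lra).
  assert (Hc1 : c * (1 - x0) = 1) by (unfold c; field; lra).
  induction S as [|p S' IHS]; intros HS l Hl HF.
  - simpl. rewrite Rmult_0_r, exp_0.
    assert (H1 : Forall (fun q => q = 1%nat) l).
    { eapply Forall_impl; [|exact HF]. intros q [Hq Hs].
      destruct (Nat.eq_dec q 1) as [|Hne]; [assumption|].
      destruct (exists_prime_divisor q) as [r [Hr Hd]]; [lia|].
      destruct (Hs r Hr Hd). }
    destruct l as [|a [|b l']]; simpl.
    + lra.
    + inversion H1; subst. simpl. unfold Rpower. rewrite ln_1, Rmult_0_r, exp_0. lra.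
    + inversion H1 as [|? ? Ha H1']; inversion H1'; subst.
      inversion Hl as [|? ? Hn _]. exfalso. apply Hn. now left.
  - inversion HS as [|? ? Hp HS']; subst.
    set (K := exp (c * sum_pow_list nu S')).
    set (x := Rpower (INR p) (-nu)).
    pose proof (xp_le p Hp) as Hx. fold x in Hx.
    assert (HK : 0 < K) by apply exp_pos.
    set (B := K * (1 + c * x)).
    assert (HB : B <= exp (c * sum_pow_list nu (p :: S'))).
    { simpl. fold x. rewrite Rmult_plus_distr_l, exp_plus. fold K. unfold B.
      rewrite (Rmult_comm (exp _) K). apply Rmult_le_compat_l; [lra|].
      apply exp_ineq1_le. }
    eapply Rle_trans; [|exact HB]. clear HB.
    assert (Hmain : forall N l, NoDup l ->
      Forall (fun q => (1 <= q <= N)%nat /\ smooth (p :: S') q) l ->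
      sum_pow_list nu l <= B).
    { induction N as [|N IHN]; intros l0 Hl0 HF0.
      - destruct l0 as [|a l0']; [simpl; unfold B; apply Rmult_le_pos; [lra|]; assert (0 <= c * x) by (apply Rmult_le_pos; lra); lra|].
        inversion HF0 as [|? ? [Ha _] _]. lia.
      - rewrite (sum_split nu (fun q => (q mod p =? 0)%nat) l0).
        set (l1 := filter (fun q => (q mod p =? 0)%nat) l0).
        set (lr := filter _ l0).
        assert (Hr : sum_pow_list nu lr <= K).
        { apply IHS; [exact HS'| apply NoDup_filter; exact Hl0|].
          apply Forall_forall. intros q Hq. unfold lr in Hq.
          apply filter_In in Hq as [Hq Hb].
          rewrite Forall_forall in HF0. destruct (HF0 q Hq) as [Hq1 Hs].
          split; [lia|]. intros r Hrp Hrd.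
          destruct (Hs r Hrp Hrd) as [->|Hin]; [|exact Hin].
          apply Nat.Lcm0.mod_divide in Hrd. rewrite Hrd in Hb. discriminate. }
        assert (HF1 : Forall (fun q => (1 <= q)%nat /\ Nat.divide p q) l1).
        { apply Forall_forall. intros q Hq. unfold l1 in Hq.
          apply filter_In in Hq as [Hq Hb].
          rewrite Forall_forall in HF0. destruct (HF0 q Hq) as [Hq1 _].
          split; [lia|]. apply Nat.Lcm0.mod_divide. apply Nat.eqb_eq. exact Hb. }
        rewrite (sum_div nu p l1) by (lia || exact HF1). fold x.
        assert (Hd : sum_pow_list nu (map (fun q => (q / p)%nat) l1) <= B).
        { apply IHN.
          - apply NoDup_map_NoDup_ForallPairs; [|apply NoDup_filter; exact Hl0].
            intros a b Ha Hb E.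
            rewrite Forall_forall in HF1.
            destruct (HF1 a Ha) as [_ [ka Hka]]. destruct (HF1 b Hb) as [_ [kb Hkb]].
            subst a b. rewrite !Nat.div_mul in E by lia. now subst.
          - apply Forall_forall. intros y Hy. apply in_map_iff in Hy as [q [<- Hq]].
            pose proof Hq as Hq'. unfold l1 in Hq'. apply filter_In in Hq' as [Hq0 _].
            rewrite Forall_forall in HF0, HF1. destruct (HF0 q Hq0) as [Hqb Hs].
            destruct (HF1 q Hq) as [_ [k Hk]]. subst q.
            rewrite Nat.div_mul by lia.
            split; [split; [destruct k; lia|]|].
            + destruct k; [lia|]. nia.
            + intros r Hrp Hrd. apply Hs; [exact Hrp|].
              apply Nat.divide_mul_l. exact Hrd. }
        assert (Hcx : 1 <= c * (1 - x)) by nra.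
        assert (Hxd : x * sum_pow_list nu (map (fun q => (q / p)%nat) l1) <= x * B)
          by (apply Rmult_le_compat_l; lra).
        assert (K + x * B <= B).
        { unfold B. assert (0 <= K * x * (c * (1 - x) - 1)) by
            (apply Rmult_le_pos; [apply Rmult_le_pos; lra|lra]). nra. }
        lra. }
    apply (Hmain (list_max l) l Hl).
    apply Forall_forall. intros q Hq. rewrite Forall_forall in HF.
    destruct (HF q Hq) as [H1 H2]. repeat split; try assumption.
    pose proof (proj1 (list_max_le l (list_max l)) (le_n _)) as HM.
    rewrite Forall_forall in HM. exact (HM q Hq).
Qed.
End Main.

Theorem mainTheorem5 (Q : nat -> Prop)
  (HQpos : subset_Nstar Q)
  (Hfree : complement_free Q)
  (Hinf : infinite_set Q) :
  forall nu : R, 0 < nu ->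
    (summable_pow Q nu <-> summable_pow (Supp Q) nu).
Proof.
  intros nu Hnu. split.
  - intros [M HM]. exists M. intros l Hl HF. apply HM; [exact Hl|].
    eapply Forall_impl; [|exact HF]. intros p [Hp [q [Hq Hd]]].
    apply NNPP. intros Hnp.
    pose proof (prime_nat_ge2 p Hp).
    apply (proj1 (Hfree q (HQpos q Hq)) Hq). exists p. repeat split; auto. lia.
  - intros [Ms HMs].
    pose proof (x0_lt1 nu Hnu) as Hx0.
    set (c := / (1 - Rpower 2 (- nu))).
    assert (Hc : 0 < c) by (unfold c; apply Rinv_0_lt_compat; lra).
    exists (exp (c * Ms)). intros l Hl HF.
    set (S := filter (fun p => andb (if prime_dec (Z.of_nat p) then true else false)
                 (existsb (fun q => (q mod p =? 0)%nat) l)) (seq 0 (S (list_max l)))).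
    assert (HSp : forall p, In p S -> is_prime_nat p /\ exists q, In q l /\ Nat.divide p q).
    { intros p Hp. unfold S in Hp. apply filter_In in Hp as [_ Hb].
      apply andb_prop in Hb as [Hb1 Hb2].
      destruct (prime_dec (Z.of_nat p)) as [Hpr|]; [|discriminate].
      split; [exact Hpr|]. apply existsb_exists in Hb2 as [q [Hq Hm]].
      exists q. split; [exact Hq|]. apply Nat.Lcm0.mod_divide. apply Nat.eqb_eq. exact Hm. }
    eapply Rle_trans; [apply (smooth_bound nu Hnu S)|].
    + apply Forall_forall. intros p Hp. apply prime_nat_ge2. apply (HSp p Hp).
    + exact Hl.
    + apply Forall_forall. intros q Hq. rewrite Forall_forall in HF.
      pose proof (HQpos q (HF q Hq)) as Hq1. split; [exact Hq1|].
      intros r Hr Hrd. unfold S. apply filter_In. split.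
      * apply in_seq. split; [lia|].
        pose proof (Nat.divide_pos_le r q ltac:(lia) Hrd).
        pose proof (proj1 (list_max_le l (list_max l)) (le_n _)) as HM.
        rewrite Forall_forall in HM. specialize (HM q Hq). lia.
      * apply andb_true_intro. split.
        -- destruct (prime_dec (Z.of_nat r)); [reflexivity|contradiction].
        -- apply existsb_exists. exists q. split; [exact Hq|].
           apply Nat.eqb_eq. apply Nat.Lcm0.mod_divide. exact Hrd.
    + apply exp_mono. fold c. apply Rmult_le_compat_l; [lra|].
      apply HMs.
      * apply NoDup_filter. apply seq_NoDup.
      * apply Forall_forall. intros p Hp. destruct (HSp p Hp) as [Hpr [q [Hq Hd]]].
        split; [exact Hpr|]. exists q. split; [|exact Hd].
        rewrite Forall_forall in HF. exact (HF q Hq).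
Qed.
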